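(* Let $t$, $k$ and $q$ be integers such that $q \ge 0$, $0 \le t < k$ and $t \equiv k \pmod 2$, and let $s \in [0,t+1]$ be the unique integer satisfying $s \equiv q + \frac{k-t-2}{2} \pmod{t+2}$. Then for any integer $n$ such that \[n \ge \max\left\{k,\ \frac{1}{2(t+2)}k^2 + \frac{q-s}{t+2}k - \frac{t}{2} + s\right\}\] and any function $f:[n]\to \{-1,1\}$ with $|f([n])| \le q$, there is a $k$-block $B \subseteq [n]$ with $|f(B)| \le t$.
   Context: $[n]=\{1,\dots,n\}$. For a function $f$ defined on a set $X$ with integer values and $Y\subseteq X$, $f(Y)=\sum_{y\in Y} f(y)$. A $k$-block is a set of $k$ consecutive integers. *)

(* Defs.v *)
From mathcomp Require Import all_boot all_order all_algebra.
Set Implicit Arguments. Unset Strict Implicit. Unset Printing Implicit Defensive.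
Import Order.TTheory GRing.Theory Num.Theory.

(* f(B) for the k-block B = {a+1, ..., a+k} *)
Definition block_sum (f : nat -> int) (a k : nat) : int :=
  (\sum_(a.+1 <= i < (a + k).+1) f i)%R.

(* Main.v *)
Require Import Defs.
From mathcomp Require Import all_boot all_order all_algebra.
From mathcomp Require Import zify ring lra.
Import Order.TTheory GRing.Theory Num.Theory.
Local Open Scope ring_scope.

Definition PS (f : nat -> int) (x y : nat) : int := \sum_(x <= i < y) f i.

Lemma Psplit f x y z : (x <= y)%N -> (y <= z)%N -> PS f x z = PS f x y + PS f y z.
Proof. move=> h1 h2; rewrite /PS (big_cat_nat h1 h2) //. Qed.

Lemma Pparity f n x m : (1 <= x)%N -> (x + m <= n.+1)%N ->
  (forall i, (1 <= i <= n)%N -> f i = 1 \/ f i = -1) ->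
  exists c : nat, (c <= m)%N /\ PS f x (x + m) = m%:Z - 2 * c%:Z.
Proof.
move=> hx; elim: m => [|m IH] hm hf.
  by exists 0%N; rewrite /PS addn0 big_geq.
have [c [hc E]] := IH ltac:(lia) hf.
rewrite /PS addnS big_nat_recr /=; last by lia.
rewrite -/(PS f x (x + m)) E.
have : (1 <= x + m <= n)%N by lia.
move=> /hf [] ->.
  by exists c; split; [lia | lia].
by exists c.+1; split; [lia | lia].
Qed.

Lemma Pstep f a k : PS f (a.+1).+1 (a.+1 + k).+1 = PS f a.+1 (a + k).+1 - f a.+1 + f (a + k).+1.
Proof.
rewrite /PS.
have h1 : \sum_(a.+1 <= i < (a+k).+2) f i = f a.+1 + \sum_(a.+2 <= i < (a+k).+2) f i.
  by rewrite big_ltn //; lia.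
have h2 : \sum_(a.+1 <= i < (a+k).+2) f i = \sum_(a.+1 <= i < (a+k).+1) f i + f (a+k).+1.
  by rewrite big_nat_recr //=; lia.
have -> : (a.+1 + k).+1 = (a + k).+2 by lia.
lia.
Qed.

Lemma core t k q n h j s (f : nat -> int) :
  k = (t + 2 + 2 * h)%N -> (q + h = j * (t + 2) + s)%N -> (s < t + 2)%N ->
  (j * k + s + h + 1 <= n)%N -> (k <= n)%N ->
  (forall i, (1 <= i <= n)%N -> f i = 1 \/ f i = -1) ->
  PS f 1 n.+1 <= q%:Z -> t%:Z < block_sum f 0 k ->
  exists a : nat, (a + k <= n)%N /\ `| block_sum f a k | <= t%:Z.
Proof.
move=> Hk Hq Hs Hn Hkn hf HS H0.
case: (boolP (has (fun a => `|block_sum f a k| <= t%:Z) (iota 0 (n - k).+1))).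
  move=> /hasP [a]; rewrite mem_iota => /andP [_ ha] hb.
  by exists a; split=> //; lia.
move=> /hasPn Hbad.
have Hbad' : forall a, (a + k <= n)%N -> t%:Z < `|block_sum f a k|.
  move=> a ha; have := Hbad a; rewrite mem_iota.
  have -> : (0 <= a < 0 + (n - k).+1)%N by lia.
  by move=> /(_ isT); rewrite -ltNge.
have Hpar : forall a, (a + k <= n)%N -> exists c : nat, (c <= k)%N /\
    block_sum f a k = k%:Z - 2 * c%:Z.
  move=> a ha; have [c [hc E]] := Pparity f n a.+1 k isT ltac:(lia) hf.
  exists c; split => //; rewrite /block_sum -E /PS; congr (\sum_(_ <= i < _) _); lia.
have Hpos : forall a, (a + k <= n)%N -> (t + 2)%:Z <= block_sum f a k.
  elim=> [|a IH] ha.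
    have [c [_ E]] := Hpar 0%N ha; lia.
  have IH' := IH ltac:(lia).
  have hb := Hbad' _ ha.
  have [c [_ E]] := Hpar _ ha.
  have St : block_sum f a.+1 k = block_sum f a k - f a.+1 + f (a + k).+1.
    by rewrite /block_sum -Pstep.
  have : (1 <= a.+1 <= n)%N by lia.
  have : (1 <= (a + k).+1 <= n)%N by lia.
  move=> /hf h1 /hf h2; lia.
set m := (n %/ k)%N; set r := (n %% k)%N.
have kpos : (0 < k)%N by lia.
have Hnr : n = (m * k + r)%N by rewrite /m /r -divn_eq.
have Hr : (r < k)%N by rewrite /r ltn_pmod.
have Hblocks : forall m', (r + m' * k <= n)%N ->
    (m' * (t + 2))%:Z <= PS f r.+1 (r.+1 + m' * k).
  elim=> [|m' IH] hm'.
    by rewrite /PS mul0n addn0 big_geq.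
  rewrite (Psplit f r.+1 (r.+1 + m' * k)); [|lia|lia].
  have := IH ltac:(lia).
  have := Hpos (r + m' * k)%N ltac:(lia).
  have -> : PS f (r.+1 + m' * k) (r.+1 + m'.+1 * k) = block_sum f (r + m' * k) k.
    by rewrite /block_sum /PS; congr (\sum_(_ <= i < _) _); lia.
  lia.
have HB := Hblocks m ltac:(lia).
have Htot : PS f 1 n.+1 = PS f 1 r.+1 + PS f r.+1 (r.+1 + m * k).
  rewrite (Psplit f 1 r.+1); [|lia|lia]; congr (_ + _); congr (PS _ _ _); lia.
have [c1 [hc1 E1]] := Pparity f n 1%N r isT ltac:(lia) hf.
have [c2 [hc2 E2]] := Pparity f n r.+1 (k - r)%N isT ltac:(lia) hf.
have Hg0 : block_sum f 0 k = PS f 1 r.+1 + PS f r.+1 k.+1.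
  rewrite -Psplit; [|lia|lia]; by rewrite /block_sum /PS add0n.
have Hg0' := Hpos 0%N ltac:(lia).
have e1 : (1 + r = r.+1)%N by lia.
have e2 : (r.+1 + (k - r) = k.+1)%N by lia.
rewrite e1 in E1; rewrite e2 in E2.
have Hmain1 : (m * (t + 2) <= q + h)%N by lia.
have Hmain2 : (m * (t + 2) <= q + r)%N by lia.
have Hmain3 : (m * (t + 2) + r <= q + 2 * h)%N by lia.
exfalso.
case: (ltngtP m j) => Hmj.
- have : (m.+1 * k <= j * k)%N by rewrite leq_mul2r Hmj orbT.
  lia.
- have : (j.+1 * (t + 2) <= m * (t + 2))%N by rewrite leq_mul2r Hmj orbT.
  lia.
- subst m; lia.
Qed.

Lemma ratpart (t k q s n h j : nat) :
  k = (t + 2 + 2 * h)%N -> (q + h = j * (t + 2) + s)%N ->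
  ((k%:Q) ^+ 2 / (2 * (t%:Q + 2)) + (q%:Q - s%:Q) * k%:Q / (t%:Q + 2)
     - t%:Q / 2 + s%:Q <= n%:Q) -> (j * k + s + h + 1 <= n)%N.
Proof.
move=> Hk Hq H.
rewrite -!pmulrn in H.
have Eq : q%:R = ((j * (t + 2) + s)%N)%:R - h%:R :> rat.
  by rewrite -Hq natrD addrK.
rewrite Eq Hk in H.
rewrite -(ler_nat rat) Hk.
apply: le_trans H; rewrite le_eqVlt; apply/orP; left; apply/eqP.
rewrite !natrD !natrM.
have t2 : (t%:R + 2 : rat) != 0 by rewrite gt_eqF // ltr_wpDl.
field.
exact: t2.
Qed.

Theorem theorem2p2 (t k q s n : nat) (f : nat -> int) :
  (t < k)%N ->
  t = k %[mod 2] ->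
  (s <= t.+1)%N ->
  s = (q + (k - t - 2) %/ 2)%N %[mod t.+2] ->
  (k <= n)%N ->
  ((k%:Q) ^+ 2 / (2 * (t%:Q + 2)) + (q%:Q - s%:Q) * k%:Q / (t%:Q + 2)
     - t%:Q / 2 + s%:Q <= n%:Q) ->
  (forall i, (1 <= i <= n)%N -> f i = 1 \/ f i = -1) ->
  `| \sum_(1 <= i < n.+1) f i | <= q%:Z ->
  exists a : nat, (a + k <= n)%N /\ `| block_sum f a k | <= t%:Z.
Proof.
move=> Htk Hpar Hs Hsm Hkn HQ hf HS.
set h := ((k - t - 2) %/ 2)%N in Hsm.
have Hk : k = (t + 2 + 2 * h)%N by rewrite /h; lia.
rewrite modn_small // in Hsm.
set j := ((q + h) %/ t.+2)%N.
have Hq : (q + h = j * (t + 2) + s)%N.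
  by rewrite Hsm /j addn2 -divn_eq.
have Hn := @ratpart _ _ _ _ _ _ _ Hk Hq HQ.
have Hs' : (s < t + 2)%N by lia.
case: (lerP `|block_sum f 0 k| t%:Z) => Hb.
  by exists 0%N; split; [lia|].
case: (ltrP t%:Z (block_sum f 0 k)) => Hsg.
  apply: (@core _ _ _ _ _ _ _ _ Hk Hq Hs' Hn Hkn hf) => //.
  by rewrite /PS; lia.
have hf' : forall i, (1 <= i <= n)%N -> (fun i => - f i) i = 1 \/ (fun i => - f i) i = -1.
  by move=> i /hf [] ->; [right|left].
have Eb : forall a, block_sum (fun i => - f i) a k = - block_sum f a k.
  by move=> a; rewrite /block_sum sumrN.
have HS' : PS (fun i => - f i) 1 n.+1 <= q%:Z by rewrite /PS sumrN; apply: le_trans HS; rewrite -normrN; exact: ler_norm.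
have H0' : t%:Z < block_sum (fun i => - f i) 0 k by rewrite Eb; lia.
have [a [ha hb]] := @core _ _ _ _ _ _ _ _ Hk Hq Hs' Hn Hkn hf' HS' H0'.
by exists a; split => //; rewrite Eb normrN in hb.
Qed.
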